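(* In the setting described in the context, $$|\eta_h^{(2)}|-\gamma\le|J(u)-J(\tilde u)|\le|\eta_h^{(2)}|+\gamma,$$ where $$\gamma:=|J(u)-J(u_h^{(2)})|+|\mathcal{R}^{(3)}-\mathcal{R}^{(3)(2)}|+|\rho(\tilde u)(\tilde z)|+|\mathcal{R}^{(3)}|.$$
   Context: Let $U$ and $V$ be real Banach spaces with dual $V^*$. Let $\mathcal{A}:U\to V^*$ be a (nonlinear) operator that is three times continuously Fréchet differentiable, and let $J:U\to\mathbb{R}$ be three times continuously Fréchet differentiable. Notation: $\mathcal{A}(w)(v)$ is the value of $\mathcal{A}(w)\in V^*$ at $v\in V$. For fixed $v$, $\mathcal{A}'(w)(\varphi,v)$, $\mathcal{A}''(w)(\varphi,\psi,v)$ and $\mathcal{A}'''(w)(\varphi,\psi,\chi,v)$ denote the first, second and third Fréchet derivatives of $w\mapsto\mathcal{A}(w)(v)$ at $w$ in the directions $\varphi,\psi,\chi\in U$. Analogously, $J'(w)(\varphi)$ and $J'''(w)(\varphi,\psi,\chi)$ denote derivatives of $J$. Let $u\in U$ satisfy $\mathcal{A}(u)(v)=0$ for all $v\in V$, and let $z\in V$ satisfy $\mathcal{A}'(u)(\varphi,z)=J'(u)(\varphi)$ for all $\varphi\in U$. Let $U_h^{(2)}\subset U$ and $V_h^{(2)}\subset V$ be finite-dimensional subspaces. Let $u_h^{(2)}\in U_h^{(2)}$ satisfy $\mathcal{A}(u_h^{(2)})(v)=0$ for all $v\in V_h^{(2)}$. Let $z_h^{(2)}\in V_h^{(2)}$ satisfy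 $\mathcal{A}'(u_h^{(2)})(\varphi,z_h^{(2)})=J'(u_h^{(2)})(\varphi)$ for all $\varphi\in U_h^{(2)}$. Let $\tilde u\in U_h^{(2)}$ and $\tilde z\in V_h^{(2)}$ be arbitrary fixed elements. Define $\rho(\tilde u)(v):=-\mathcal{A}(\tilde u)(v)$ and $\rho^*(\tilde u,\tilde z)(\varphi):=J'(\tilde u)(\varphi)-\mathcal{A}'(\tilde u)(\varphi,\tilde z)$. With $e:=u-\tilde u$ and $e^*:=z-\tilde z$, define $$\mathcal{R}^{(3)}:=\frac12\int_0^1\Big[J'''(\tilde u+se)(e,e,e)-\mathcal{A}'''(\tilde u+se)(e,e,e,\tilde z+se^* )-3\mathcal{A}''(\tilde u+se)(e,e,e^* )\Big]s(s-1)\,ds.$$ Let $\mathcal{R}^{(3)(2)}$ be the same expression with $e,e^*,z$ replaced by $e^{(2)}:=u_h^{(2)}-\tilde u$, $e^{(2),*}:=z_h^{(2)}-\tilde z$, $z_h^{(2)}$. Define $\eta_h^{(2)}:=\tfrac12\rho(\tilde u)(z_h^{(2)}-\tilde z)+\tfrac12\rho^*(\tilde u,\tilde z)(u_h^{(2)}-\tilde u)$. *)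

(* Defs.v *)
From Stdlib Require Import Reals List.
From Coquelicot Require Import Coquelicot.
Open Scope R_scope.

Section Defs.
Context {U V : CompleteNormedModule R_AbsRing}.

Definition lin_comb {X : ModuleSpace R_Ring} (cs : list R) (l : list X) : X :=
  fold_right (fun p acc => plus (scal (fst p) (snd p)) acc) zero (combine cs l).

Definition in_span {X : ModuleSpace R_Ring} (l : list X) (x : X) : Prop :=
  exists cs : list R, length cs = length l /\ x = lin_comb cs l.

Definition FinDimSubspace {X : ModuleSpace R_Ring} (S : X -> Prop) : Prop :=
  exists l : list X, forall x, S x <-> in_span l x.

Definition LinU (f : U -> R) : Prop :=
  forall (a : R) (x y : U), f (plus (scal a x) y) = a * f x + f y.
Definition LinV (f : V -> R) : Prop :=
  forall (a : R) (x y : V), f (plus (scal a x) y) = a * f x + f y.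

(* ---------- bounded multilinear forms U^k x V -> R ----------
   (elements of V^dual, L(U,V^dual), L(U,L(U,V^dual)), L(U,L(U,L(U,V^dual))),
    identified isometrically with bounded multilinear forms) *)
Definition bndV0 (g : V -> R) (c : R) : Prop :=
  forall v, Rabs (g v) <= c * norm v.
Definition bndV1 (g : U -> V -> R) (c : R) : Prop :=
  forall h v, Rabs (g h v) <= c * norm h * norm v.
Definition bndV2 (g : U -> U -> V -> R) (c : R) : Prop :=
  forall h k v, Rabs (g h k v) <= c * norm h * norm k * norm v.
Definition bndV3 (g : U -> U -> U -> V -> R) (c : R) : Prop :=
  forall h k l v, Rabs (g h k l v) <= c * norm h * norm k * norm l * norm v.

Definition formV0 (g : V -> R) : Prop := LinV g /\ exists C, bndV0 g C.
Definition formV1 (g : U -> V -> R) : Prop :=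
  (forall h, LinV (g h)) /\ (forall v, LinU (fun h => g h v)) /\ exists C, bndV1 g C.
Definition formV2 (g : U -> U -> V -> R) : Prop :=
  (forall h k, LinV (g h k)) /\ (forall k v, LinU (fun h => g h k v)) /\
  (forall h v, LinU (fun k => g h k v)) /\ exists C, bndV2 g C.
Definition formV3 (g : U -> U -> U -> V -> R) : Prop :=
  (forall h k l, LinV (g h k l)) /\ (forall k l v, LinU (fun h => g h k l v)) /\
  (forall h l v, LinU (fun k => g h k l v)) /\ (forall h k v, LinU (fun l => g h k l v)) /\
  exists C, bndV3 g C.

(* A : U -> V^dual three times continuously Frechet differentiable, with
   A1 = A', A2 = A'', A3 = A''' (derivatives w.r.t. the operator norms). *)
Definition OperatorC3 (A : U -> V -> R) (A1 : U -> U -> V -> R)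
  (A2 : U -> U -> U -> V -> R) (A3 : U -> U -> U -> U -> V -> R) : Prop :=
  (forall w, formV0 (A w)) /\ (forall w, formV1 (A1 w)) /\
  (forall w, formV2 (A2 w)) /\ (forall w, formV3 (A3 w)) /\
  (forall w (eps : R), 0 < eps -> exists delta, 0 < delta /\ forall h, norm h < delta ->
     bndV0 (fun v => A (plus w h) v - A w v - A1 w h v) (eps * norm h)) /\
  (forall w (eps : R), 0 < eps -> exists delta, 0 < delta /\ forall h, norm h < delta ->
     bndV1 (fun k v => A1 (plus w h) k v - A1 w k v - A2 w h k v) (eps * norm h)) /\
  (forall w (eps : R), 0 < eps -> exists delta, 0 < delta /\ forall h, norm h < delta ->
     bndV2 (fun k l v => A2 (plus w h) k l v - A2 w k l v - A3 w h k l v) (eps * norm h)) /\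
  (forall w (eps : R), 0 < eps -> exists delta, 0 < delta /\ forall w', norm (minus w' w) < delta ->
     bndV3 (fun h k l v => A3 w' h k l v - A3 w h k l v) eps).

Definition bnd1 (g : U -> R) (c : R) : Prop := forall h, Rabs (g h) <= c * norm h.
Definition bnd2 (g : U -> U -> R) (c : R) : Prop :=
  forall h k, Rabs (g h k) <= c * norm h * norm k.
Definition bnd3 (g : U -> U -> U -> R) (c : R) : Prop :=
  forall h k l, Rabs (g h k l) <= c * norm h * norm k * norm l.

Definition form1 (g : U -> R) : Prop := LinU g /\ exists C, bnd1 g C.
Definition form2 (g : U -> U -> R) : Prop :=
  (forall h, LinU (g h)) /\ (forall k, LinU (fun h => g h k)) /\ exists C, bnd2 g C.
Definition form3 (g : U -> U -> U -> R) : Prop :=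
  (forall h k, LinU (g h k)) /\ (forall h l, LinU (fun k => g h k l)) /\
  (forall k l, LinU (fun h => g h k l)) /\ exists C, bnd3 g C.

Definition FunctionalC3 (J : U -> R) (J1 : U -> U -> R) (J2 : U -> U -> U -> R)
  (J3 : U -> U -> U -> U -> R) : Prop :=
  (forall w, form1 (J1 w)) /\ (forall w, form2 (J2 w)) /\ (forall w, form3 (J3 w)) /\
  (forall w (eps : R), 0 < eps -> exists delta, 0 < delta /\ forall h, norm h < delta ->
     Rabs (J (plus w h) - J w - J1 w h) <= eps * norm h) /\
  (forall w (eps : R), 0 < eps -> exists delta, 0 < delta /\ forall h, norm h < delta ->
     bnd1 (fun k => J1 (plus w h) k - J1 w k - J2 w h k) (eps * norm h)) /\
  (forall w (eps : R), 0 < eps -> exists delta, 0 < delta /\ forall h, norm h < delta ->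
     bnd2 (fun k l => J2 (plus w h) k l - J2 w k l - J3 w h k l) (eps * norm h)) /\
  (forall w (eps : R), 0 < eps -> exists delta, 0 < delta /\ forall w', norm (minus w' w) < delta ->
     bnd3 (fun h k l => J3 w' h k l - J3 w h k l) eps).

Definition rho (A : U -> V -> R) (ut : U) (v : V) : R := - A ut v.
Definition rhostar (J1 : U -> U -> R) (A1 : U -> U -> V -> R) (ut : U) (zt : V) (phi : U) : R :=
  J1 ut phi - A1 ut phi zt.

Definition R3 (J3 : U -> U -> U -> U -> R) (A2 : U -> U -> U -> V -> R)
  (A3 : U -> U -> U -> U -> V -> R) (ut : U) (zt : V) (u : U) (z : V) : R :=
  let e := minus u ut in
  let es := minus z zt in
  1/2 * RInt (fun s =>
     (J3 (plus ut (scal s e)) e e e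
      - A3 (plus ut (scal s e)) e e e (plus zt (scal s es))
      - 3 * A2 (plus ut (scal s e)) e e es) * (s * (s - 1))) 0 1.

End Defs.

(* Main.v *)
Require Import Defs.
From Stdlib Require Import Reals List Lra.
From Coquelicot Require Import Coquelicot.
Open Scope R_scope.

Lemma Dp f g x a b : is_derive f x a -> is_derive g x b ->
  is_derive (fun t => f t + g t) x (a + b).
Proof. intros Ha Hb; exact (is_derive_plus f g x a b Ha Hb). Qed.
Lemma Dm f g x a b : is_derive f x a -> is_derive g x b ->
  is_derive (fun t => f t - g t) x (a - b).
Proof. intros Ha Hb; exact (is_derive_minus f g x a b Ha Hb). Qed.
Lemma Dmul f g x a b : is_derive f x a -> is_derive g x b ->
  is_derive (fun t => f t * g t) x (a * g x + f x * b).
Proof. intros Ha Hb; exact (is_derive_mult f g x a b Ha Hb Rmult_comm). Qed.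
Lemma Did x : is_derive (fun t : R => t) x 1.
Proof. exact (is_derive_id x). Qed.
Lemma Dc (c : R) x : is_derive (fun _ : R => c) x 0.
Proof. exact (is_derive_const c x). Qed.
Lemma is_derive_eq (f : R -> R) x l l' : is_derive f x l -> l = l' -> is_derive f x l'.
Proof. intros H ->; exact H. Qed.

Lemma Cp (f g : R -> R) x : continuous f x -> continuous g x -> continuous (fun t => f t + g t) x.
Proof. intros; exact (continuous_plus f g x H H0). Qed.
Lemma Cm (f g : R -> R) x : continuous f x -> continuous g x -> continuous (fun t => f t - g t) x.
Proof. intros; exact (continuous_minus f g x H H0). Qed.
Lemma Cmul (f g : R -> R) x : continuous f x -> continuous g x -> continuous (fun t => f t * g t) x.
Proof. intros; exact (continuous_mult f g x H H0). Qed.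
Lemma Cid x : continuous (fun t : R => t) x.
Proof. exact (continuous_id x). Qed.
Lemma Cc (c : R) x : continuous (fun _ : R => c) x.
Proof. exact (continuous_const c x). Qed.

Lemma trap (f0 f1 f2 f3 : R -> R) :
  (forall x, is_derive f0 x (f1 x)) -> (forall x, is_derive f1 x (f2 x)) ->
  (forall x, is_derive f2 x (f3 x)) -> (forall x, continuous f3 x) ->
  RInt (fun s => f3 s * (s * (s - 1))) 0 1 = 2 * (f0 1 - f0 0) - (f1 0 + f1 1).
Proof.
  intros d0 d1 d2 c3.
  pose (F := fun s => f2 s * (s * (s - 1)) - f1 s * (2 * s - 1) + 2 * f0 s).
  assert (H : is_RInt (fun s => f3 s * (s * (s - 1))) 0 1 (minus (F 1) (F 0))).
  { apply (is_RInt_derive F (fun s => f3 s * (s * (s - 1)))).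
    - intros x _. unfold F. eapply is_derive_eq.
      + apply Dp. apply Dm. apply Dmul. apply d2. apply Dmul. apply Did. apply Dm. apply Did. apply Dc.
        apply Dmul. apply d1. apply Dm. apply Dmul. apply Dc. apply Did. apply Dc.
        apply Dmul. apply Dc. apply d0. match goal with |- ?a = ?b => change (@eq R a b) end. cbv beta. ring.
    - intros x _. apply Cmul. apply c3. apply Cmul. apply Cid. apply Cm. apply Cid. apply Cc. }
  rewrite (is_RInt_unique _ _ _ _ H). unfold F, minus, plus, opp; simpl. ring.
Qed.

Lemma minus_pc_gen {G : AbelianGroup} (w k : G) : minus (plus w k) w = k.
Proof. unfold minus. change (plus (plus w k) (opp w) = k). rewrite (plus_comm w k), <- plus_assoc, plus_opp_r, plus_zero_r. reflexivity. Qed.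

Section G.
Context {U : CompleteNormedModule R_AbsRing}.

Lemma linX_zero {X : ModuleSpace R_Ring} (f : X -> R) :
  (forall a x y, f (plus (scal a x) y) = a * f x + f y) -> f zero = 0.
Proof.
  intros H. pose proof (H 1 zero zero) as H1.
  rewrite scal_zero_r, plus_zero_r in H1. lra.
Qed.
Lemma linX_scal {X : ModuleSpace R_Ring} (f : X -> R) :
  (forall a x y, f (plus (scal a x) y) = a * f x + f y) -> forall a x, f (scal a x) = a * f x.
Proof.
  intros H a x. pose proof (H a x zero) as H1. rewrite plus_zero_r in H1.
  rewrite H1, (linX_zero f H). ring.
Qed.
Lemma linX_minus {X : ModuleSpace R_Ring} (f : X -> R) :
  (forall a x y, f (plus (scal a x) y) = a * f x + f y) -> forall x y, f (minus x y) = f x - f y.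
Proof.
  intros H x y. unfold minus.
  replace x with (scal one x) at 1 by apply scal_one.
  rewrite H. rewrite <- scal_opp_one, (linX_scal f H). unfold one, opp; simpl. ring.
Qed.

Lemma wshift (ut e : U) x h : plus ut (scal (x + h) e) = plus (plus ut (scal x e)) (scal h e).
Proof. replace (scal (x + h) e) with (plus (scal x e) (scal h e)) by (rewrite <- scal_distr_r; reflexivity). rewrite plus_assoc. reflexivity. Qed.

Lemma minus_pc (w k : U) : minus (plus w k) w = k.
Proof. exact (minus_pc_gen w k). Qed.

Lemma deriv_gen (F : U -> R) (F' : U -> U -> R) (K : R) (ut e : U) x :
  0 <= K -> (forall w, LinU (F' w)) ->
  (forall w eps, 0 < eps -> exists delta, 0 < delta /\ forall h, norm h < delta ->
     Rabs (F (plus w h) - F w - F' w h) <= eps * norm h * K) ->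
  is_derive (fun s => F (plus ut (scal s e))) x (F' (plus ut (scal x e)) e).
Proof.
  intros HK Hlin Hc. apply is_derive_Reals. intros eps Heps.
  set (w := plus ut (scal x e)). set (ne := norm e).
  assert (Hne : 0 <= ne) by apply norm_ge_0.
  set (eps' := eps / (2 * (ne * K + 1))).
  assert (Heps' : 0 < eps') by (unfold eps'; apply Rdiv_lt_0_compat; nra).
  destruct (Hc w eps' Heps') as [d [Hd Hh]].
  assert (Hd' : 0 < d / (ne + 1)) by (apply Rdiv_lt_0_compat; lra).
  exists (mkposreal _ Hd'). intros h Hh0 Hhd. simpl in Hhd.
  match goal with |- context [F (plus ut ?q)] =>
    replace (F (plus ut q)) with (F (plus w (scal h e))) by (f_equal; symmetry; apply wshift) end.
  assert (Hn : norm (scal h e) <= Rabs h * ne) by exact (norm_scal _ _).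
  assert (Hah : 0 < Rabs h) by (apply Rabs_pos_lt; exact Hh0).
  assert (Hlt : Rabs h * (ne + 1) < d).
  { apply Rmult_lt_reg_r with (/(ne+1)). apply Rinv_0_lt_compat; lra.
    rewrite Rmult_assoc, Rinv_r by lra. lra. }
  assert (Hn2 : norm (scal h e) < d) by nra.
  specialize (Hh _ Hn2).
  rewrite (linX_scal _ (Hlin w)) in Hh.
  set (D := F (plus w (scal h e)) - F w - h * F' w e) in Hh.
  replace ((F (plus w (scal h e)) - F w) / h - F' w e) with (D / h) by (unfold D; field; exact Hh0).
  rewrite Rabs_div by exact Hh0.
  assert (HD : Rabs D <= eps' * (Rabs h * ne) * K).
  { eapply Rle_trans. exact Hh. apply Rmult_le_compat_r. exact HK.
    apply Rmult_le_compat_l. lra. exact Hn. }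
  apply Rle_lt_trans with (eps' * ne * K).
  - apply Rmult_le_reg_r with (Rabs h). exact Hah.
    unfold Rdiv. rewrite Rmult_assoc, Rinv_l by lra. nra.
  - assert (eps' * (ne * K + 1) = eps / 2) by (unfold eps'; field; nra).
    nra.
Qed.

Lemma cont_gen (G : U -> R) (K : R) (ut e : U) (x : R) :
  0 <= K ->
  (forall w eps, 0 < eps -> exists delta, 0 < delta /\ forall w', norm (minus w' w) < delta ->
     Rabs (G w' - G w) <= eps * K) ->
  continuous (fun s : R => G (plus ut (scal s e))) x.
Proof.
  intros HK Hc. apply continuity_pt_filterlim. intros eps Heps.
  set (w := plus ut (scal x e)). set (ne := norm e).
  assert (Hne : 0 <= ne) by apply norm_ge_0.
  set (eps' := eps / (2 * (K + 1))).
  assert (Heps' : 0 < eps') by (unfold eps'; apply Rdiv_lt_0_compat; nra).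
  destruct (Hc w eps' Heps') as [d [Hd Hh]].
  assert (Hd' : 0 < d / (ne + 1)) by (apply Rdiv_lt_0_compat; lra).
  exists (d / (ne + 1)). split. exact Hd'.
  intros y [_ Hy]. simpl in Hy |- *. unfold Rdist in *.
  replace y with (x + (y - x)) by ring. match goal with |- context [G (plus ut ?q)] =>
    replace (G (plus ut q)) with (G (plus w (scal (y - x) e))) by (f_equal; symmetry; apply wshift) end.
  assert (Hn : norm (scal (y - x) e) <= Rabs (y - x) * ne) by exact (norm_scal _ _).
  assert (Hlt : Rabs (y - x) * (ne + 1) < d).
  { apply Rmult_lt_reg_r with (/(ne+1)). apply Rinv_0_lt_compat; lra.
    rewrite Rmult_assoc, Rinv_r by lra. lra. }
  assert (Habs : 0 <= Rabs (y - x)) by apply Rabs_pos.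
  assert (Hn2 : norm (minus (plus w (scal (y - x) e)) w) < d) by (rewrite minus_pc; nra).
  specialize (Hh _ Hn2).
  assert (eps' * (K + 1) = eps / 2) by (unfold eps'; field; nra).
  nra.
Qed.
End G.

Lemma linX_add {X : ModuleSpace R_Ring} (f : X -> R) :
  (forall a x y, f (plus (scal a x) y) = a * f x + f y) -> forall a x y, f (plus y (scal a x)) = f y + a * f x.
Proof. intros H a x y. rewrite plus_comm, H. ring. Qed.

Lemma plus_minus_gen {G : AbelianGroup} (a b : G) : plus a (minus b a) = b.
Proof. unfold minus. change (plus a (plus b (opp a)) = b).
  rewrite (plus_comm b (opp a)), plus_assoc, plus_opp_r, plus_zero_l. reflexivity. Qed.
Theorem mainTheorem8
  (U V : CompleteNormedModule R_AbsRing)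
  (A : U -> V -> R) (A1 : U -> U -> V -> R) (A2 : U -> U -> U -> V -> R)
  (A3 : U -> U -> U -> U -> V -> R)
  (J : U -> R) (J1 : U -> U -> R) (J2 : U -> U -> U -> R) (J3 : U -> U -> U -> U -> R)
  (HA : OperatorC3 A A1 A2 A3) (HJ : FunctionalC3 J J1 J2 J3)
  (u : U) (z : V)
  (Hu : forall v : V, A u v = 0)
  (Hz : forall phi : U, A1 u phi z = J1 u phi)
  (Uh : U -> Prop) (Vh : V -> Prop)
  (HUh : FinDimSubspace Uh) (HVh : FinDimSubspace Vh)
  (uh : U) (zh : V) (Huh : Uh uh) (Hzh : Vh zh)
  (Huh_eq : forall v : V, Vh v -> A uh v = 0)
  (Hzh_eq : forall phi : U, Uh phi -> A1 uh phi zh = J1 uh phi)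
  (ut : U) (zt : V) (Hut : Uh ut) (Hzt : Vh zt) :
  let eta := 1/2 * rho A ut (minus zh zt) + 1/2 * rhostar J1 A1 ut zt (minus uh ut) in
  let gamma := Rabs (J u - J uh) + Rabs (R3 J3 A2 A3 ut zt u z - R3 J3 A2 A3 ut zt uh zh)
               + Rabs (rho A ut zt) + Rabs (R3 J3 A2 A3 ut zt u z) in
  Rabs eta - gamma <= Rabs (J u - J ut) <= Rabs eta + gamma.
Proof.
  intros eta gamma.
  destruct HA as [HA0 [HA1 [HA2 [HA3 [DA0 [DA1 [DA2 CA3]]]]]]].
  destruct HJ as [HJ1 [HJ2 [HJ3 [DJ0 [DJ1 [DJ2 CJ3]]]]]].
  set (e := minus uh ut) in *. set (es := minus zh zt) in *.
  pose (w := fun s : R => plus ut (scal s e)).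
  assert (Hne : 0 <= norm e) by apply norm_ge_0.
  assert (dJ : forall x, is_derive (fun s => J (w s)) x (J1 (w x) e)).
  { intro x. apply (deriv_gen J J1 1 ut e x). lra. intro w0; exact (proj1 (HJ1 w0)).
    intros w0 eps Heps. destruct (DJ0 w0 eps Heps) as [d [Hd H]]. exists d. split; auto.
    intros h Hh. rewrite Rmult_1_r. apply H; auto. }
  assert (dJ1 : forall x, is_derive (fun s => J1 (w s) e) x (J2 (w x) e e)).
  { intro x. apply (deriv_gen (fun w => J1 w e) (fun w h => J2 w h e) (norm e) ut e x). lra.
    intro w0; exact (proj1 (proj2 (HJ2 w0)) e).
    intros w0 eps Heps. destruct (DJ1 w0 eps Heps) as [d [Hd H]]. exists d. split; auto.
    intros h Hh. apply (H h Hh e). }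
  assert (dJ2 : forall x, is_derive (fun s => J2 (w s) e e) x (J3 (w x) e e e)).
  { intro x. apply (deriv_gen (fun w => J2 w e e) (fun w h => J3 w h e e) (norm e * norm e) ut e x).
    nra.
    intro w0; exact (proj1 (proj2 (proj2 (HJ3 w0))) e e).
    intros w0 eps Heps. destruct (DJ2 w0 eps Heps) as [d [Hd H]]. exists d. split; auto.
    intros h Hh. rewrite <- Rmult_assoc. apply (H h Hh e e). }
  assert (cJ3 : forall x, continuous (fun s => J3 (w s) e e e) x).
  { intro x. apply (cont_gen (fun w => J3 w e e e) (norm e * norm e * norm e) ut e x).
    apply Rmult_le_pos; nra.
    intros w0 eps Heps. destruct (CJ3 w0 eps Heps) as [d [Hd H]]. exists d. split; auto.
    intros w' Hw. replace (eps * (norm e * norm e * norm e)) with (eps * norm e * norm e * norm e) by ring.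
    apply (H w' Hw e e e). }
  assert (dA : forall v x, is_derive (fun s => A (w s) v) x (A1 (w x) e v)).
  { intros v x. apply (deriv_gen (fun w => A w v) (fun w h => A1 w h v) (norm v) ut e x).
    apply norm_ge_0.
    intro w0; exact (proj1 (proj2 (HA1 w0)) v).
    intros w0 eps Heps. destruct (DA0 w0 eps Heps) as [d [Hd H]]. exists d. split; auto.
    intros h Hh. apply (H h Hh v). }
  assert (dA1 : forall v x, is_derive (fun s => A1 (w s) e v) x (A2 (w x) e e v)).
  { intros v x. apply (deriv_gen (fun w => A1 w e v) (fun w h => A2 w h e v) (norm e * norm v) ut e x).
    apply Rmult_le_pos; auto; apply norm_ge_0.
    intro w0; exact (proj1 (proj2 (HA2 w0)) e v).
    intros w0 eps Heps. destruct (DA1 w0 eps Heps) as [d [Hd H]]. exists d. split; auto.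
    intros h Hh. rewrite <- Rmult_assoc. apply (H h Hh e v). }
  assert (dA2 : forall v x, is_derive (fun s => A2 (w s) e e v) x (A3 (w x) e e e v)).
  { intros v x. apply (deriv_gen (fun w => A2 w e e v) (fun w h => A3 w h e e v) (norm e * norm e * norm v) ut e x).
    pose proof (norm_ge_0 v). apply Rmult_le_pos; nra.
    intro w0; exact (proj1 (proj2 (HA3 w0)) e e v).
    intros w0 eps Heps. destruct (DA2 w0 eps Heps) as [d [Hd H]]. exists d. split; auto.
    intros h Hh. replace (eps * norm h * (norm e * norm e * norm v)) with (eps * norm h * norm e * norm e * norm v) by ring.
    apply (H h Hh e e v). }
  assert (cA3 : forall v x, continuous (fun s => A3 (w s) e e e v) x).
  { intros v x. apply (cont_gen (fun w => A3 w e e e v) (norm e * norm e * norm e * norm v) ut e x).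
    pose proof (norm_ge_0 v). apply Rmult_le_pos; [apply Rmult_le_pos; nra | auto].
    intros w0 eps Heps. destruct (CA3 w0 eps Heps) as [d [Hd H]]. exists d. split; auto.
    intros w' Hw. replace (eps * (norm e * norm e * norm e * norm v)) with (eps * norm e * norm e * norm e * norm v) by ring.
    apply (H w' Hw e e e v). }
  pose (f0 := fun s => J (w s) - (A (w s) zt + s * A (w s) es)).
  pose (f1 := fun s => J1 (w s) e - A1 (w s) e zt - A (w s) es - s * A1 (w s) e es).
  pose (f2 := fun s => J2 (w s) e e - A2 (w s) e e zt - 2 * A1 (w s) e es - s * A2 (w s) e e es).
  pose (f3 := fun s => J3 (w s) e e e - A3 (w s) e e e zt - 3 * A2 (w s) e e es - s * A3 (w s) e e e es).
  assert (d0 : forall x, is_derive f0 x (f1 x)).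
  { intro x. unfold f0, f1. eapply is_derive_eq.
    apply Dm; [apply dJ | apply Dp; [apply dA | apply Dmul; [apply Did | apply dA]]].
    match goal with |- ?a = ?b => change (@eq R a b) end. cbv beta. ring. }
  assert (d1 : forall x, is_derive f1 x (f2 x)).
  { intro x. unfold f1, f2. eapply is_derive_eq.
    apply Dm; [apply Dm; [apply Dm; [apply dJ1 | apply dA1] | apply dA] | apply Dmul; [apply Did | apply dA1]].
    match goal with |- ?a = ?b => change (@eq R a b) end. cbv beta. ring. }
  assert (d2 : forall x, is_derive f2 x (f3 x)).
  { intro x. unfold f2, f3. eapply is_derive_eq.
    apply Dm; [apply Dm; [apply Dm; [apply dJ2 | apply dA2] | apply Dmul; [apply Dc | apply dA1]] | apply Dmul; [apply Did | apply dA2]].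
    match goal with |- ?a = ?b => change (@eq R a b) end. cbv beta. ring. }
  assert (c3 : forall x, continuous f3 x).
  { intro x. unfold f3.
    apply Cm; [apply Cm; [apply Cm; [apply cJ3 | apply cA3] | apply Cmul; [apply Cc | ]] | apply Cmul; [apply Cid | apply cA3]].
    apply (ex_derive_continuous (K:=R_AbsRing) (V:=R_NormedModule) (fun t => A2 (w t) e e es)). eexists. apply dA2. }
  pose proof (trap f0 f1 f2 f3 d0 d1 d2 c3) as Htrap.
  assert (w0 : w 0 = ut).
  { unfold w. transitivity (plus ut (@zero U)). f_equal. exact (@scal_zero_l _ (CompleteNormedModule.ModuleSpace R_AbsRing U) e). apply plus_zero_r. }
  assert (w1 : w 1 = uh).
  { unfold w. transitivity (plus ut e). f_equal. exact (@scal_one _ (CompleteNormedModule.ModuleSpace R_AbsRing U) e). exact (@plus_minus_gen (CompleteNormedModule.AbelianGroup R_AbsRing U) ut uh). }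
  assert (E1 : A uh zt = 0) by (apply Huh_eq; exact Hzt).
  assert (E2 : A uh es = A uh zh - A uh zt) by exact (linX_minus _ (proj1 (HA0 uh)) zh zt).
  assert (E3 : A uh zh = 0) by (apply Huh_eq; exact Hzh).
  assert (E4 : A1 uh e es = A1 uh e zh - A1 uh e zt) by exact (linX_minus _ (proj1 (HA1 uh) e) zh zt).
  assert (E5 : J1 uh e = J1 uh uh - J1 uh ut) by exact (linX_minus _ (proj1 (HJ1 uh)) uh ut).
  assert (E6 : A1 uh e zh = A1 uh uh zh - A1 uh ut zh) by exact (linX_minus (fun h => A1 uh h zh) (proj1 (proj2 (HA1 uh)) zh) uh ut).
  assert (E7 := Hzh_eq uh Huh). assert (E8 := Hzh_eq ut Hut).
  assert (HR : R3 J3 A2 A3 ut zt uh zh = J uh - J ut - rho A ut zt - eta).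
  { unfold R3. cbv zeta. fold e es.
    rewrite (RInt_ext _ (fun s => f3 s * (s * (s - 1)))).
    2:{ intros s _. unfold f3, w.
        assert (L := linX_add _ (proj1 (HA3 (plus ut (scal s e))) e e e) s es zt).
        match goal with |- (?a - ?b - ?c) * ?g = _ =>
          replace b with (A3 (plus ut (scal s e)) e e e zt + s * A3 (plus ut (scal s e)) e e e es) by (symmetry; exact L) end.
        match goal with |- ?a = ?b => change (@eq R a b) end. ring. }
    rewrite Htrap. unfold f0, f1. rewrite w0, w1. unfold eta, rho, rhostar. lra. }
  unfold gamma.
  set (ra := R3 J3 A2 A3 ut zt u z) in *. set (rb := R3 J3 A2 A3 ut zt uh zh) in *.
  set (p := rho A ut zt) in *.
  assert (Hd : J u - J ut = (J u - J uh) + rb + p + eta) by lra.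
  rewrite Hd. clear - Hd.
  set (a := J u - J uh). clearbody a ra rb p eta.
  unfold Rabs; repeat destruct Rcase_abs; split; lra.
Qed.
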